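(* Let $A$ be a synaptic algebra, $p,q\in P$, and let $c:=(pqp+p^{\perp}q^{\perp}p^{\perp})^{1/2}$ and $s:=(pq^{\perp}p+p^{\perp}qp^{\perp})^{1/2}$ be the cosine and sine effects of $q$ with respect to $p$. The following are mutually equivalent: (i) $pCq$; (ii) $pqp^{\perp}+p^{\perp}qp=0$; (iii) $q=c^2p+s^2p^{\perp}$; (iv) $cs=0$; (v) $c$ and $s$ are projections and $c^{\perp}=s$; (vi) $c,s\in P$, $c^{\perp}=s$, and $q=cp+c^{\perp}p^{\perp}=s^{\perp}p+sp^{\perp}=|p-s|$; (vii) there exists a projection $t\in P$ such that $tCp$ and $q=|p-t|$.
   Context: Synaptic algebra (Foulis): $R$ is a real linear associative algebra with unit $1$, and $A\subseteq R$ is a real linear subspace with $1\in A$. For $a,b\in A$ write $aCb$ iff $ab=ba$; $C(a):=\{b\in A: aCb\}$; $CC(a):=\{b\in A: bCd \text{ for all } d\in C(a)\}$. $A$ is a synaptic algebra with enveloping algebra $R$ iff: (SA1) $A$ is a partially ordered archimedean real linear space with positive cone $A^+$, $1$ is an order unit, $\|\cdot\|$ the order-unit norm; (SA2) $a\in A\Rightarrow a^2\in A^+$; (SA3) $a,b\in A^+\Rightarrow aba\in A^+$; (SA4) if $a\in A$, $b\in A^+$, $aba=0$ then $ab=ba=0$; (SA5) if $a\in A^+$ there is $b\in A^+\cap CC(a)$ with $b^2=a$; (SA6) for $a\in A$ there is $p=p^2\in A$ with $ab=0\Leftrightarrow pb=0$ for all $b\in A$; (SA7) if $1\le a$ there is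 $b\in A$ with $ab=ba=1$; (SA8) if $a,b\in A$, $a_1\le a_2\le\cdots$ are pairwise commuting elements of $C(b)$ with $\|a-a_n\|\to0$, then $a\in C(b)$. $A$ is nondegenerate. Products are computed in $R$. $P:=\{p\in A:p=p^2\}$, $p^{\perp}:=1-p$. For $0\le a$, $a^{1/2}$ is its unique positive square root in $A$; $|a|:=(a^2)^{1/2}$. *)

(* Defs.v *)
From HB Require Import structures.
From mathcomp Require Import all_boot all_order all_algebra.
From mathcomp Require Import reals.
From Stdlib Require Import ClassicalEpsilon.
Set Implicit Arguments. Unset Strict Implicit. Unset Printing Implicit Defensive.
Import Order.TTheory GRing.Theory Num.Theory.
Local Open Scope ring_scope.

Section Synaptic.
Variables (R : realType) (E : algType R).
(* A : the subspace A of the enveloping algebra E; Pos : the positive cone A^+ *)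
Variables (A Pos : E -> Prop).

Definition leA (a b : E) : Prop := Pos (b - a).

Definition commA (a b : E) : Prop := a * b = b * a.
Definition CA (a : E) : E -> Prop := fun b => A b /\ commA a b.
Definition CCA (a : E) : E -> Prop :=
  fun b => A b /\ forall d, CA a d -> commA b d.

Record synaptic : Prop := Synaptic {
  sa_add : forall a b, A a -> A b -> A (a + b);
  sa_scale : forall (k : R) a, A a -> A (k *: a);
  sa_one : A 1;
  sa_pos_sub : forall a, Pos a -> A a;
  sa_pos_add : forall a b, Pos a -> Pos b -> Pos (a + b);
  sa_pos_scale : forall (k : R) a, 0 <= k -> Pos a -> Pos (k *: a);
  sa_pos_zero : Pos 0;
  sa_pos_antisym : forall a, Pos a -> Pos (- a) -> a = 0;
  sa_archi : forall a b, A a -> A b ->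
      (forall n : nat, leA (n%:R *: a) b) -> leA a 0;
  sa_unit : forall a, A a -> exists n : nat, leA a (n%:R *: 1);
  sa2 : forall a, A a -> Pos (a * a);
  sa3 : forall a b, Pos a -> Pos b -> Pos (a * b * a);
  sa4 : forall a b, A a -> Pos b -> a * b * a = 0 -> a * b = 0 /\ b * a = 0;
  sa5 : forall a, Pos a -> exists b, Pos b /\ CCA a b /\ b * b = a;
  sa6 : forall a, A a -> exists p, A p /\ p * p = p /\
          forall b, A b -> (a * b = 0 <-> p * b = 0);
  sa7 : forall a, A a -> leA 1 a -> exists b, A b /\ a * b = 1 /\ b * a = 1;
  (* (SA8); ||a - a_n|| -> 0 for the order-unit norm written out:
     for every e > 0, eventually -e1 <= a - a_n <= e1 *)
  sa8 : forall a b (an : nat -> E), A a -> A b ->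
      (forall n, CA b (an n)) ->
      (forall m n, commA (an m) (an n)) ->
      (forall n, leA (an n) (an n.+1)) ->
      (forall e : R, 0 < e -> exists N, forall n, (N <= n)%N ->
          leA (- (e *: 1)) (a - an n) /\ leA (a - an n) (e *: 1)) ->
      CA b a
}.

Definition projA (p : E) : Prop := A p /\ p * p = p.

Definition sqrtA (a : E) : E :=
  epsilon (inhabits 0) (fun b => Pos b /\ b * b = a).

Definition absA (a : E) : E := sqrtA (a * a).

End Synaptic.

(* Main.v *)
Require Import Defs.
From HB Require Import structures.
From mathcomp Require Import all_boot all_order all_algebra.
From mathcomp Require Import reals.
From Stdlib Require Import ClassicalEpsilon.
Import Order.TTheory GRing.Theory Num.Theory.
Local Open Scope ring_scope.
Set Implicit Arguments.

Section Alg.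
Context {R : realType} {E : algType R}.
Implicit Types a e f g x : E.

Lemma idem_compl e : e * e = e -> (1 - e) * (1 - e) = 1 - e.
Proof. by move=> He; rewrite mulrBl mul1r mulrBr mulr1 He subrr subr0. Qed.
Lemma idem_l e : e * e = e -> e * (1 - e) = 0.
Proof. by move=> He; rewrite mulrBr mulr1 He subrr. Qed.
Lemma idem_r e : e * e = e -> (1 - e) * e = 0.
Proof. by move=> He; rewrite mulrBl mul1r He subrr. Qed.

Lemma LeC e f g : e * e = e -> e * (e*f*e + (1-e)*g*(1-e)) = e*f*e.
Proof. by move=> He; rewrite mulrDr !mulrA He (idem_l He) !mul0r addr0. Qed.
Lemma LCe e f g : e * e = e -> (e*f*e + (1-e)*g*(1-e)) * e = e*f*e.
Proof. by move=> He; rewrite mulrDl -!mulrA He (idem_r He) !mulr0 addr0. Qed.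
Lemma LeC' e f g : e * e = e -> (1-e) * (e*f*e + (1-e)*g*(1-e)) = (1-e)*g*(1-e).
Proof. by move=> He; rewrite mulrDr !mulrA (idem_r He) (idem_compl He) !mul0r add0r. Qed.
Lemma LCe' e f g : e * e = e -> (e*f*e + (1-e)*g*(1-e)) * (1-e) = (1-e)*g*(1-e).
Proof. by move=> He; rewrite mulrDl -!mulrA (idem_l He) (idem_compl He) !mulr0 add0r. Qed.

Lemma decomp e f : f = e*f*e + e*f*(1-e) + (1-e)*f*e + (1-e)*f*(1-e).
Proof.
have h : e + (1 - e) = 1 by rewrite addrC subrK.
rewrite {1}(_ : f = (e + (1-e)) * f * (e + (1-e))); last by rewrite h mul1r mulr1.
move: (1 - e) h => e' h.
rewrite mulrDl !mulrDr !mulrDl !addrA. by rewrite (addrAC (e*f*e)).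
Qed.

Lemma G3 e f : f * f = f -> e*f*(1-e)*f*e = e*f*e - e*f*e*f*e.
Proof.
move=> Hf; rewrite -!mulrA mulrBl mul1r mulrBr !mulrA Hf.
by rewrite mulrBr !mulrA.
Qed.

Lemma CC_sq e a b C : C * e = e*a*e -> C * (1-e) = (1-e)*b*(1-e) ->
  C = e*a*e + (1-e)*b*(1-e) ->
  C * C = e*a*e*a*e + (1-e)*b*(1-e)*b*(1-e).
Proof.
move=> h1 h2 h3; rewrite {2}h3 mulrDr !mulrA h1 h2.
reflexivity.
Qed.

Lemma Z1 a e : e * e = e -> a * (1-e) * e = 0.
Proof. by move=> He; rewrite -mulrA idem_r // mulr0. Qed.
Lemma Z2 a e : e * e = e -> a * e * (1-e) = 0.
Proof. by move=> He; rewrite -mulrA idem_l // mulr0. Qed.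
Lemma I1 a e : e * e = e -> a * e * e = a * e.
Proof. by move=> He; rewrite -mulrA He. Qed.
Lemma I2 a e : e * e = e -> a * (1-e) * (1-e) = a * (1-e).
Proof. by move=> He; rewrite -mulrA idem_compl. Qed.

Lemma ii_i e f : e * e = e -> e*f*(1-e) + (1-e)*f*e = 0 -> e * f = f * e.
Proof.
move=> He h.
have h1 : e * f * (1 - e) = 0.
  by move: (congr1 (fun z => e * z) h); rewrite mulr0 mulrDr !mulrA He (idem_l He) !mul0r addr0.
have h2 : (1 - e) * f * e = 0.
  by move: (congr1 (fun z => z * e) h); rewrite mul0r mulrDl (Z1 _ He) (I1 _ He) add0r.
move: h1 h2; rewrite mulrBr mulr1 !mulrBl !mul1r => k1 k2.
by rewrite (subr0_eq k1) (subr0_eq k2).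
Qed.

Lemma i_ii e f : e * e = e -> e * f = f * e -> e*f*(1-e) + (1-e)*f*e = 0.
Proof.
move=> He hc; rewrite hc -mulrA idem_l // mulr0 add0r -mulrA -hc mulrA.
by rewrite idem_r // mul0r.
Qed.


Lemma K4 e f : f = e*f*e + (1-e)*f*(1-e) -> e*f*(1-e) + (1-e)*f*e = 0.
Proof.
move=> h; move: (decomp e f); rewrite -(addrA (e*f*e)) {1}h.
by rewrite -{1}[e*f*e]addr0 => /addIr /addrI.
Qed.

Lemma K5 e f : e*f*(1-e) + (1-e)*f*e = 0 -> f = e*f*e + (1-e)*f*(1-e).
Proof.
by move=> h; rewrite {1}(decomp e f) -(addrA (e*f*e)) h addr0.
Qed.

Lemma K2 e f : e * e = e -> f * f = f -> e*f*(1-e) + (1-e)*f*e = 0 ->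
  let C := e*f*e + (1-e)*(1-f)*(1-e) in C * C = C.
Proof.
move=> He Hf h C.
have h1 : e * f * (1 - e) = 0.
  by move: (congr1 (fun z => e * z) h); rewrite mulr0 mulrDr !mulrA He (idem_l He) !mul0r addr0.
have h2 : (1 - e) * f * e = 0.
  by move: (congr1 (fun z => z * e) h); rewrite mul0r mulrDl (Z1 _ He) (I1 _ He) add0r.
rewrite /C (@CC_sq e f (1-f)); [ | exact: LCe | exact: LCe' | done].
have -> : e * f * e * f * e = e * f * e.
  by apply/eqP; rewrite eq_sym -subr_eq0 -G3 // h1 !mul0r.
have -> : (1-e) * (1-f) * (1-e) * (1-f) * (1-e) = (1-e) * (1-f) * (1-e).
  have G := G3 (1 - e) (idem_compl Hf); rewrite subKr in G.
  apply/eqP; rewrite eq_sym -subr_eq0 -G.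
  by rewrite (mulrBr (1-e) 1 f) mulr1 mulrBl idem_r // h2 subrr !mul0r.
done.
Qed.


Lemma sumCS e f : e * e = e ->
  (e*f*e + (1-e)*(1-f)*(1-e)) + (e*(1-f)*e + (1-e)*f*(1-e)) = 1.
Proof.
move=> He.
have h1 : forall a b, a*b*a + a*(1-b)*a = a*a.
  by move=> a b; rewrite -mulrDl -mulrDr (addrC b) subrK mulr1.
have h2 := h1 (1-e) (1-f); rewrite subKr in h2.
by rewrite addrACA h1 h2 He idem_compl // addrC subrK.
Qed.

Lemma abs_comp e f : e * e = e -> f * f = f -> e*f*(1-e) + (1-e)*f*e = 0 ->
  (e - (e*(1-f)*e + (1-e)*f*(1-e))) * (e - (e*(1-f)*e + (1-e)*f*(1-e))) = f.
Proof.
move=> He Hf h.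
have hSC : e*(1-f)*e + (1-e)*f*(1-e) = 1 - (e*f*e + (1-e)*(1-f)*(1-e)).
  apply: (addrI (e*f*e + (1-e)*(1-f)*(1-e))); rewrite sumCS //.
  by rewrite addrC subrK.
have SS : (e*(1-f)*e + (1-e)*f*(1-e)) * (e*(1-f)*e + (1-e)*f*(1-e)) =
     e*(1-f)*e + (1-e)*f*(1-e).
  by rewrite hSC idem_compl //; exact: K2.
have eS' : e * (e*(1-f)*e + (1-e)*f*(1-e)) = e*(1-f)*e by rewrite LeC.
have Se' : (e*(1-f)*e + (1-e)*f*(1-e)) * e = e*(1-f)*e by rewrite LCe.
set S := e*(1-f)*e + (1-e)*f*(1-e) in SS eS' Se' *.
have hS : S = e*(1-f)*e + (1-e)*f*(1-e) by [].
clearbody S.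
rewrite mulrBl !mulrBr SS eS' Se' He.
have T : e*(1-f)*e = e - e*f*e by rewrite mulrBr mulr1 mulrBl He.
rewrite hS T [RHS](K5 e f h).
move: (e*f*e) ((1-e)*f*(1-e)) => X Y.
by rewrite subKr (opprD (e - X) Y) addNKr opprK.
Qed.

End Alg.

Section Syn.
Variables (R : realType) (E : algType R) (A Pos : E -> Prop).
Hypothesis HA : synaptic A Pos.

Lemma A_opp a : A a -> A (- a).
Proof. by move=> h; rewrite -scaleN1r; apply: (sa_scale HA). Qed.
Lemma A_sub a b : A a -> A b -> A (a - b).
Proof. by move=> ha hb; apply: (sa_add HA) => //; apply: A_opp. Qed.
Lemma Pos_A a : Pos a -> A a.
Proof. exact: (sa_pos_sub HA). Qed.
Lemma pos_one : Pos 1.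
Proof. by rewrite -[1]mulr1; apply: (sa2 HA); exact: (sa_one HA). Qed.
Lemma pos_proj p : projA A p -> Pos p.
Proof. by case=> h1 h2; rewrite -h2; apply: (sa2 HA). Qed.
Lemma proj_compl p : projA A p -> projA A (1 - p).
Proof. by case=> h1 h2; split; [apply: A_sub => //; exact: (sa_one HA)| exact: idem_compl]. Qed.

Lemma posH b d : Pos b -> A d -> commA b d -> Pos (d * b * d).
Proof.
move=> hb hd hbd.
have [r [hr [[_ hrC] hrr]]] := sa5 HA hb.
have hrd : commA r d by apply: hrC; split.
rewrite -hrr.
have -> : d * (r * r) * d = r * (d * d) * r.
  by rewrite /commA in hrd; rewrite !mulrA -hrd -!mulrA hrd.
by apply: (sa3 HA) => //; apply: (sa2 HA).
Qed.

Lemma pos_sum0 a b : Pos a -> Pos b -> a + b = 0 -> a = 0.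
Proof.
move=> ha hb hab; apply: (sa_pos_antisym HA) => //.
by have -> : - a = b by apply/eqP; rewrite eq_sym -subr_eq0 opprK addrC hab.
Qed.

Lemma sq_uniq_comm x y : Pos x -> Pos y -> commA x y -> x * x = y * y -> x = y.
Proof.
move=> hx hy hxy hsq.
have hAx := Pos_A hx; have hAy := Pos_A hy.
set d := x - y.
have hd : A d by apply: A_sub.
have cx : commA x d by rewrite /commA /d mulrBr mulrBl hxy.
have cy : commA y d by rewrite /commA /d mulrBr mulrBl hxy.
have h1 := posH hx hd cx.
have h2 := posH hy hd cy.
have hsum : d * x * d + d * y * d = 0.
  rewrite -mulrDl -mulrDr /d.
  have -> : (x - y) * (x + y) = 0.
    by rewrite mulrBl !mulrDr hxy hsq addrKA subrr.
  by rewrite mul0r.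
have e1 : d * x * d = 0 by apply: pos_sum0 hsum.
have e2 : d * y * d = 0 by apply: (pos_sum0 h2 h1); rewrite addrC.
have [f1 _] := sa4 HA hd hx e1.
have [f2 _] := sa4 HA hd hy e2.
have e3 : d * 1 * d = 0 by rewrite mulr1 {2}/d mulrBr f1 f2 subrr.
have [f3 _] := sa4 HA hd pos_one e3.
by apply/eqP; rewrite -subr_eq0 -/d -[d]mulr1 f3.
Qed.

Lemma sq_uniq x y : Pos x -> Pos y -> x * x = y * y -> x = y.
Proof.
move=> hx hy hsq.
have [b [hb [[_ hbC] hbb]]] := sa5 HA (sa2 HA (Pos_A hx)).
have cx : commA b x by apply: hbC; split; [exact: Pos_A | rewrite /commA mulrA].
have cy : commA b y by apply: hbC; split; [exact: Pos_A | rewrite /commA hsq mulrA].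
rewrite -(sq_uniq_comm hb hx cx hbb) -(sq_uniq_comm hb hy cy) //.
by rewrite hbb.
Qed.

Lemma sqrt_spec a : Pos a -> Pos (sqrtA Pos a) /\ sqrtA Pos a * sqrtA Pos a = a.
Proof.
move=> ha; rewrite /sqrtA; apply: (epsilon_spec (inhabits 0) (fun b => Pos b /\ b * b = a)).
by have [b [hb [_ hbb]]] := sa5 HA ha; exists b.
Qed.

Lemma sqrt_eq a b : Pos a -> Pos b -> b * b = a -> sqrtA Pos a = b.
Proof.
move=> ha hb hbb; have [h1 h2] := sqrt_spec ha.
by apply: sq_uniq => //; rewrite h2.
Qed.

Lemma sqrt_comm a d : Pos a -> A d -> commA a d -> commA (sqrtA Pos a) d.
Proof.
move=> ha hd had.
have [b [hb [[_ hbC] hbb]]] := sa5 HA ha.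
by rewrite (sqrt_eq ha hb hbb); apply: hbC.
Qed.


Lemma K3 e f : projA A e -> projA A f -> e*f*e*f*e = e*f*e ->
  e*f*(1-e) + (1-e)*f*e = 0.
Proof.
move=> pe pf h.
have [hAe He] := pe; have [hAf Hf] := pf.
have hpe := pos_proj pe; have hpe' := pos_proj (proj_compl pe).
have hpf := pos_proj pf.
have xr : (e*f*(1-e) + (1-e)*f*e) * (1-e) = e*f*(1-e).
  by rewrite mulrDl (I2 _ He) (Z2 _ He) addr0.
have xl : (1-e) * (e*f*(1-e) + (1-e)*f*e) = (1-e)*f*e.
  by rewrite mulrDr !mulrA (idem_r He) (idem_compl He) !mul0r add0r.
set x := e*f*(1-e) + (1-e)*f*e.
have hx : A x.
  have dx : x = f - e*f*e - (1-e)*f*(1-e).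
    have hd : f = e*f*e + x + (1-e)*f*(1-e) by rewrite /x addrA; exact: decomp.
    move: (e*f*e) ((1-e)*f*(1-e)) hd => a d ->.
    by rewrite addrAC addrK addrC addKr.
  rewrite dx; apply: A_sub; [apply: A_sub|]; first exact: hAf.
    by apply: Pos_A; apply: (sa3 HA).
  by apply: Pos_A; apply: (sa3 HA).
have e1 : x * (1-e) * x = 0.
  rewrite xr /x mulrDr !mulrA (Z1 _ He) !mul0r add0r (I2 _ He).
  by rewrite G3 // h subrr.
have [k1 k2] := sa4 HA hx hpe' e1.
have hx2 : x = x*(1-e) + (1-e)*x by rewrite xr xl.
by rewrite hx2 k1 k2 addr0.
Qed.

End Syn.

Unset Implicit Arguments.

Theorem corollary5p7 (R : realType) (E : algType R) (A Pos : E -> Prop)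
  (HA : synaptic A Pos) (p q : E) (Hp : projA A p) (Hq : projA A q) :
  let c := sqrtA Pos (p * q * p + (1 - p) * (1 - q) * (1 - p)) in
  let s := sqrtA Pos (p * (1 - q) * p + (1 - p) * q * (1 - p)) in
  [<-> (* (i) *) commA p q;
       (* (ii) *) p * q * (1 - p) + (1 - p) * q * p = 0;
       (* (iii) *) q = c * c * p + s * s * (1 - p);
       (* (iv) *) c * s = 0;
       (* (v) *) projA A c /\ projA A s /\ 1 - c = s;
       (* (vi) *) projA A c /\ projA A s /\ 1 - c = s /\
                  q = c * p + (1 - c) * (1 - p) /\
                  q = (1 - s) * p + s * (1 - p) /\
                  q = absA Pos (p - s);
       (* (vii) *) exists t, projA A t /\ commA t p /\ q = absA Pos (p - t)].
Proof.
move=> c s.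
have [hAp hp] := Hp; have [hAq hq] := Hq.
have Pp := pos_proj HA Hp; have Pq := pos_proj HA Hq.
have Pp' := pos_proj HA (proj_compl HA Hp); have Pq' := pos_proj HA (proj_compl HA Hq).
have PC : Pos (p* q* p + (1-p)*(1-q)*(1-p)) := sa_pos_add HA (sa3 HA Pp Pq) (sa3 HA Pp' Pq').
have PS : Pos (p*(1-q)* p + (1-p)* q*(1-p)) := sa_pos_add HA (sa3 HA Pp Pq') (sa3 HA Pp' Pq).
have habs := abs_comp hp hq.
have [Pc cc] : Pos c /\ c * c = p* q* p + (1-p)*(1-q)*(1-p) := sqrt_spec HA _ PC.
have [Ps ss] : Pos s /\ s * s = p*(1-q)* p + (1-p)* q*(1-p) := sqrt_spec HA _ PS.
have cid : (p* q* p + (1-p)*(1-q)*(1-p)) * (p* q* p + (1-p)*(1-q)*(1-p)) =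
   p* q* p + (1-p)*(1-q)*(1-p) -> c = p* q* p + (1-p)*(1-q)*(1-p).
  by move=> h; rewrite /c; exact: (sqrt_eq HA _ PC PC h).
have sid : (p*(1-q)* p + (1-p)* q*(1-p)) * (p*(1-q)* p + (1-p)* q*(1-p)) =
   p*(1-q)* p + (1-p)* q*(1-p) -> s = p*(1-q)* p + (1-p)* q*(1-p).
  by move=> h; rewrite /s; exact: (sqrt_eq HA _ PS PS h).
have hSC : p*(1-q)* p + (1-p)* q*(1-p) = 1 - (p* q* p + (1-p)*(1-q)*(1-p)).
  apply: (addrI (p* q* p + (1-p)*(1-q)*(1-p))); rewrite sumCS //.
  by rewrite addrC subrK.
have ii_C := K2 hp hq.
have pC : p * (p* q* p + (1-p)*(1-q)*(1-p)) = p* q* p by rewrite LeC.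
have Cp : (p* q* p + (1-p)*(1-q)*(1-p)) * p = p* q* p by rewrite LCe.
have pS : p * (p*(1-q)* p + (1-p)* q*(1-p)) = p*(1-q)* p by rewrite LeC.
have Sp : (p*(1-q)* p + (1-p)* q*(1-p)) * p = p*(1-q)* p by rewrite LCe.
have Sp' : (p*(1-q)* p + (1-p)* q*(1-p)) * (1 - p) = (1-p)* q*(1-p) by rewrite LCe'.
have AC : A (p* q* p + (1-p)*(1-q)*(1-p)) := Pos_A HA _ PC.
have AS : A (p*(1-q)* p + (1-p)* q*(1-p)) := Pos_A HA _ PS.
set C2 := p* q* p + (1-p)*(1-q)*(1-p) in PC cc cid hSC ii_C pC Cp AC *.
set S2 := p*(1-q)* p + (1-p)* q*(1-p) in PS ss sid hSC pS Sp Sp' habs AS *.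
clearbody C2 S2 c s.
have C_ii : C2 * C2 = C2 -> p * q * (1 - p) + (1 - p) * q * p = 0.
  move=> h; apply: (K3 HA Hp Hq).
  have e : p * (C2 * C2) * p = p * C2 * p by rewrite h.
  rewrite mulrA in e; rewrite pC in e; rewrite -mulrA in e; rewrite Cp in e.
  by rewrite !mulrA !(I1 _ hp) in e.
have hSS : C2 * C2 = C2 -> S2 * S2 = S2 by move=> h; rewrite hSC (idem_compl h).
have h01 : commA p q -> p * q * (1 - p) + (1 - p) * q * p = 0 by move=> h; exact: i_ii.
have h12 : p * q * (1 - p) + (1 - p) * q * p = 0 -> q = c * c * p + s * s * (1 - p).
  by move=> h; rewrite cc ss Cp Sp'; exact: K5 p q h.
have h23 : q = c * c * p + s * s * (1 - p) -> c * s = 0.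
  move=> h; rewrite cc ss Cp Sp' in h.
  have hC := ii_C (K4 p h).
  by rewrite (cid hC) (sid (hSS hC)) hSC idem_l.
have h34 : c * s = 0 -> projA A c /\ projA A s /\ 1 - c = s.
  move=> h.
  have h0 : C2 * S2 = 0 by rewrite -cc -ss mulrA -(mulrA c c s) h mulr0 mul0r.
  rewrite hSC mulrBr mulr1 in h0.
  have hC : C2 * C2 = C2 by rewrite -(subr0_eq h0).
  rewrite (cid hC) (sid (hSS hC)) hSC.
  split; first by split.
  by split=> //; apply: (proj_compl HA); split.
have h45 : projA A c /\ projA A s /\ 1 - c = s ->
   projA A c /\ projA A s /\ 1 - c = s /\
                  q = c * p + (1 - c) * (1 - p) /\
                  q = (1 - s) * p + s * (1 - p) /\
                  q = absA Pos (p - s).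
  move=> [hcP [hsP hcs]].
  have eC : c = C2 by rewrite -cc hcP.2.
  have hC : C2 * C2 = C2 by rewrite -eC hcP.2.
  have h2 := C_ii hC.
  have eS := sid (hSS hC).
  have hq1 : q = c * p + (1 - c) * (1 - p).
    by rewrite hcs eS eC Cp Sp'; exact: K5 p q h2.
  do 3 (split => //).
  split => //; split; first by rewrite -hcs subKr.
  rewrite /absA eS; symmetry; apply: (sqrt_eq HA q _ Pq).
    by apply: (sa2 HA); apply: A_sub HA _ _ hAp AS.
  by rewrite habs.
have h56 : projA A c /\ projA A s /\ 1 - c = s /\
                  q = c * p + (1 - c) * (1 - p) /\
                  q = (1 - s) * p + s * (1 - p) /\
                  q = absA Pos (p - s) ->
    exists t, projA A t /\ commA t p /\ q = absA Pos (p - t).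
  move=> [_ [hsP [_ [_ [_ ha]]]]].
  exists s; split=> //; split=> //.
  have eS : s = S2 by rewrite -ss hsP.2.
  by rewrite eS /commA Sp pS.
have h60 : (exists t, projA A t /\ commA t p /\ q = absA Pos (p - t)) -> commA p q.
  move=> [t [[hAt ht] [htp hqt]]].
  have hpt : (p - t) * p = p * (p - t) by rewrite mulrBl mulrBr htp.
  rewrite /commA hqt /absA; symmetry; apply: (sqrt_comm HA _ hAp).
    by apply: (sa2 HA); apply: A_sub HA _ _ hAp hAt.
  by rewrite /commA -mulrA hpt mulrA hpt -mulrA.
split; first exact: h01.
split; first exact: h12.
split; first exact: h23.
split; first exact: h34.
split; first exact: h45.
split; first exact: h56.
exact: h60.
Qed.
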